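(* Let $(x''_n)_n=((x_n,x'_n))_n$ be a sequence in $G''=G\times G'$ with $d(x_n,o)\to\infty$ and $d'(x'_n,o')\to\infty$. Then, after passing to a subsequence, the perturbed diamonds $D_n(x''_n)$ converge in the Fell topology to either $\emptyset$, or $G''$, or a set $C$ for which there exist $\theta\in\partial G$, $\theta'\in\partial G'$ and $\delta\in\mathbb R$ with $$HB((\theta,\theta'),\delta-2/c)\subseteq C\subseteq HB((\theta,\theta'),\delta+1/c),$$ where these are horoballs of $(G'',\rho_c)$ (so in particular of type II, with the same center).
   Context: $G,G'$ are finitely generated groups with neutral elements $o,o'$, word metrics $d,d'$ from Cayley graphs with respect to finite generating sets, ball volumes $v_n,v'_n$, growth rates $a=\lim v_n^{1/n}>1$, $a'=\lim (v'_n)^{1/n}>1$, and $c:=\log a/\log a'$. $G''=G\times G'$ has origin $o''=(o,o')$ and metric $\rho_c((x,x'),(y,y'))=d(x,y)+d'(x',y')/c$. Fix a non-decreasing $f:\mathbb Z_{\ge0}\to\mathbb Z_{\ge0}$ and a strictly increasing sequence $(r_j)$ in $\mathbb Z_{\ge 0}$ such that $f(0)=0$, with $r'_j:=f(r_j)$ one has $0<\inf_n v'_{r'_n}/v_{r_n}\le\sup_n v'_{r'_n}/v_{r_n}<\infty$, and $\forall m\,\exists N\,\forall n\ge N: |f(n+m)-f(n)-cm|\le1$ (such $f,(r_j)$ exist). The perturbed diamond with parameter $n$ and center $x''=(x,x')$ is $D_n(x''):=\bigcup_{t=0}^{r_n}\{(y,y'): d(x,y)=r_n-t,\ d'(x',y')\le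 f(t)\}$. Fell convergence of subsets $S_n\to S$ of the countable set $G''$ means pointwise convergence of indicator functions. Horoboundary of a countable set $H$ with origin $o_H$ and boundedly finite metric $\rho$: with $\rho_x(y)=\rho(x,y)-\rho(x,o_H)$, $\overline H$ is the closure of $\{\rho_x\}$ in the pointwise topology among $1$-Lipschitz functions vanishing at $o_H$, $\partial H=\overline H\setminus H$, and for $\theta\in\partial H$ with function $d_\theta$, the horoball is $HB(\theta,\delta):=\{x: d_\theta(x)\le\delta\}$. For $\theta\in\partial G$, $\theta'\in\partial G'$, $(\theta,\theta')$ denotes the point of $\partial G''$ given by the function $(y,y')\mapsto d_\theta(y)+d_{\theta'}(y')/c$; horoballs centered at such points are called of type II. *)

(* Defs.v *)
From Stdlib Require Import Reals ClassicalEpsilon.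
From Coquelicot Require Import Coquelicot.
From mathcomp Require Import all_boot.

Set Implicit Arguments.
Unset Strict Implicit.
Unset Printing Implicit Defensive.

Section WordMetric.
Variable G : groupType.

Definition gens (S : seq G) : seq G := S ++ map (@monoid.inv G) S.

Fixpoint words (A : seq G) (n : nat) : seq (seq G) :=
  if n is k.+1 then [seq a :: w | a <- A, w <- words A k] else [:: [::]].

Definition wprod (w : seq G) : G := foldr (@monoid.mul G) (@monoid.one G) w.

Definition reach (S : seq G) (g : G) (n : nat) : bool :=
  has (fun w => wprod w == g) (words (gens S) n).

Definition generates (S : seq G) : Prop := forall g : G, exists n, reach S g n.

(* word length |g|_S : least length of a word representing g (0 if none) *)
Definition word_len (S : seq G) (g : G) : nat :=
  match excluded_middle_informative (exists n, reach S g n) with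
  | left h => ex_minn h
  | right _ => 0
  end.

Definition word_dist (S : seq G) (x y : G) : nat :=
  word_len S (monoid.mul (monoid.inv x) y).

(* v_n = number of elements of the ball of radius n about the neutral
   element, i.e. of distinct values of words of length <= n *)
Definition ball_vol (S : seq G) (n : nat) : nat :=
  size (undup (flatten [seq map wprod (words (gens S) k) | k <- iota 0 n.+1])).

Local Open Scope R_scope.

Definition growth_rate (S : seq G) (a : R) : Prop :=
  is_lim_seq (fun n => Rpower (INR (ball_vol S n)) (/ INR n)) a.

End WordMetric.

Section Horo.
Variable H : Type.
Local Open Scope R_scope.

Definition busemann (m : H -> H -> R) (o x : H) : H -> R :=
  fun y => m x y - m x o.

(* h lies in the closure (pointwise topology) of {rho_x}, among
   1-Lipschitz functions vanishing at o *)
Definition in_horo_closure (m : H -> H -> R) (o : H) (h : H -> R) : Prop :=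
  (forall y z, Rabs (h y - h z) <= m y z) /\ h o = 0 /\
  (forall (F : list H) (eps : R), 0 < eps ->
     exists x, forall y, List.In y F -> Rabs (busemann m o x y - h y) < eps).

Definition horo_boundary (m : H -> H -> R) (o : H) (h : H -> R) : Prop :=
  in_horo_closure m o h /\ ~ (exists x, forall y, h y = busemann m o x y).

Definition horoball (h : H -> R) (delta : R) : H -> Prop :=
  fun y => h y <= delta.

(* Fell convergence of subsets of a countable set: pointwise convergence
   of indicator functions *)
Definition fell_conv (Sn : nat -> H -> Prop) (S : H -> Prop) : Prop :=
  forall z, exists N, forall n, (N <= n)%nat -> (Sn n z <-> S z).

End Horo.

Local Open Scope R_scope.
Definition rho_c (G G' : groupType) (S : seq G) (S' : seq G') (c : R)
  (p q : G * G') : R :=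
  INR (word_dist S p.1 q.1) + INR (word_dist S' p.2 q.2) / c.

Definition diamond (G G' : groupType) (S : seq G) (S' : seq G')
  (f : nat -> nat) (r : nat) (p : G * G') : G * G' -> Prop :=
  fun q => exists t, (t <= r)%nat /\ word_dist S p.1 q.1 = (r - t)%nat /\
                     (word_dist S' p.2 q.2 <= f t)%nat.

Definition pair_horo (G G' : Type) (c : R) (th : G -> R) (th' : G' -> R) :
  G * G' -> R := fun q => th q.1 + th' q.2 / c.

(* Main.v *)
Require Import Defs.
From Stdlib Require Import Reals ClassicalEpsilon Lia Lra ZArith.
From Coquelicot Require Import Coquelicot.
From mathcomp Require Import all_boot zify.

Module Part1.

Section Words.
Variable G : groupType.
Variable S : seq G.
Hypothesis hS : generates S.

Lemma mem_words (A : seq G) n w : (w \in words A n) = (size w == n) && all (fun a => a \in A) w.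
Proof.
elim: n w => [|n IH] w /=.
  by rewrite inE; case: w.
apply/allpairsP/idP.
  move=> [[b u] [/= hb hu ->]] /=. by rewrite eqSS hb /= -IH.
case: w => [//|b u] /= /andP [hs /andP [hb hu]].
exists (b, u); split => //=. by rewrite IH; rewrite eqSS in hs; rewrite hs.
Qed.

Lemma reachP g n : reflect (exists w : seq G, [/\ size w = n, all (fun a => a \in gens S) w & wprod w = g]) (reach S g n).
Proof.
apply: (iffP hasP).
  move=> [w]; rewrite mem_words => /andP [/eqP h1 h2] /eqP h3. by exists w.
move=> [w [h1 h2 h3]]; exists w; first by rewrite mem_words h1 eqxx.
by apply/eqP.
Qed.

Lemma wprod_cat (w1 w2 : seq G) : wprod (w1 ++ w2) = monoid.mul (wprod w1) (wprod w2).
Proof. elim: w1 => [|b w IH] /=; first by rewrite mul1g. by rewrite IH mulgA. Qed.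

Lemma gens_inv b : b \in gens S -> monoid.inv b \in gens S.
Proof.
rewrite /gens !mem_cat => /orP [h|/mapP [c hc ->]].
  by rewrite (map_f _ h) orbT.
by rewrite invgK hc.
Qed.

Lemma wprod_rev w : wprod (rev (map (@monoid.inv G) w)) = monoid.inv (wprod w).
Proof.
elim: w => [|b w IH] /=; first by rewrite invg1.
by rewrite rev_cons -cats1 wprod_cat IH /= mulg1 invgM.
Qed.

Lemma reach_len g n : reach S g n -> (word_len S g <= n)%N.
Proof.
move=> h; rewrite /word_len; case: excluded_middle_informative => [e|ne].
  by case: ex_minnP => m _ hm; apply: hm.
by [].
Qed.

Lemma len_reach g : reach S g (word_len S g).
Proof.
rewrite /word_len; case: excluded_middle_informative => [e|ne].
  by case: ex_minnP.
by case: ne; apply: hS.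
Qed.

Lemma reach_mul g1 g2 m n : reach S g1 m -> reach S g2 n -> reach S (monoid.mul g1 g2) (m + n).
Proof.
move=> /reachP [w1 [s1 a1 p1]] /reachP [w2 [s2 a2 p2]].
apply/reachP; exists (w1 ++ w2); split.
- by rewrite size_cat s1 s2.
- by rewrite all_cat a1 a2.
- by rewrite wprod_cat p1 p2.
Qed.

Lemma reach_inv g n : reach S g n -> reach S (monoid.inv g) n.
Proof.
move=> /reachP [w [s1 a1 p1]].
apply/reachP; exists (rev (map (@monoid.inv G) w)); split.
- by rewrite size_rev size_map.
- rewrite all_rev all_map; apply/allP => b hb /=; apply: gens_inv; exact: (allP a1).
- by rewrite wprod_rev p1.
Qed.

Lemma wd_refl x : word_dist S x x = 0%N.
Proof.
apply/eqP; rewrite -leqn0; apply: reach_len; apply/reachP; exists [::]; split => //=.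
by rewrite mulVg.
Qed.

Lemma wd_tri x y z : (word_dist S x z <= word_dist S x y + word_dist S y z)%N.
Proof.
apply: reach_len.
have -> : monoid.mul (monoid.inv x) z = monoid.mul (monoid.mul (monoid.inv x) y) (monoid.mul (monoid.inv y) z).
  by rewrite -mulgA (mulgA y) mulgV mul1g.
apply: reach_mul; exact: len_reach.
Qed.

Lemma wd_sym_le x y : (word_dist S y x <= word_dist S x y)%N.
Proof.
apply: reach_len.
have -> : monoid.mul (monoid.inv y) x = monoid.inv (monoid.mul (monoid.inv x) y).
  by rewrite invgM invgK.
apply: reach_inv; exact: len_reach.
Qed.

Lemma wd_sym x y : word_dist S x y = word_dist S y x.
Proof. by apply/eqP; rewrite eqn_leq !wd_sym_le. Qed.

Lemma neighbor b a : (0 < word_dist S b a)%N ->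
  exists s, s \in gens S /\ (word_dist S (monoid.mul b s) a <= (word_dist S b a).-1)%N.
Proof.
move=> hpos.
move: (len_reach (monoid.mul (monoid.inv b) a)) => /reachP [w [s1 a1 p1]].
rewrite /word_dist in hpos *.
case: w s1 a1 p1 => [|s u] s1 a1 p1; first by rewrite -s1 in hpos.
exists s; split; first by case/andP: a1.
apply: reach_len; apply/reachP; exists u; split.
- by rewrite -s1.
- by case/andP: a1.
- by rewrite invgM -mulgA -p1 /= mulgA mulVg mul1g.
Qed.

End Words.
Arguments wd_refl {G} S x.
Arguments wd_tri {G S} hS x y z.
Arguments wd_sym {G S} hS x y.
Arguments neighbor {G S} hS b a _.
Arguments len_reach {G S} hS g.

End Part1.
Import Part1.

Module Part2.
Local Open Scope nat_scope.

Definition strict (phi : nat -> nat) := forall m n, (m < n)%N -> (phi m < phi n)%N.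

Lemma strict_S phi : (forall k, phi k < phi k.+1)%N -> strict phi.
Proof.
move=> h m n; elim: n => [//|n IH]; rewrite ltnS leq_eqVlt => /orP [/eqP ->|hm] //.
exact: (ltn_trans (IH hm)).
Qed.

Lemma strict_ge phi : strict phi -> forall k, (k <= phi k)%N.
Proof.
move=> h; elim => [//|k IH]. have := h k k.+1 (ltnSn k). lia.
Qed.

Lemma strict_comp phi psi : strict phi -> strict psi -> strict (fun k => phi (psi k)).
Proof. by move=> h1 h2 m n hmn; apply: h1; apply: h2. Qed.

Lemma strict_id : strict id. Proof. by []. Qed.

Lemma inf_sub2 (P : nat -> nat -> Prop) : (forall k N, exists n, (N <= n)%N /\ P k n) ->
  exists phi, strict phi /\ forall k, P k (phi k).
Proof.
move=> H.
pose next k N := proj1_sig (constructive_indefinite_description _ (H k N)).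
have hn k N : (N <= next k N)%N /\ P k (next k N) by rewrite /next; case: constructive_indefinite_description.
pose fix phi (k : nat) : nat := if k is k'.+1 then next k (phi k').+1 else next 0 0.
exists phi; split.
  apply: strict_S => k /=. by move: (hn k.+1 (phi k).+1) => [h _].
by case => [|k] /=; [exact: (hn 0 0).2 | exact: (hn k.+1 (phi k).+1).2].
Qed.

Lemma inf_sub (P : nat -> Prop) : (forall N, exists n, (N <= n)%N /\ P n) ->
  exists phi, strict phi /\ forall k, P (phi k).
Proof. move=> H; exact: (inf_sub2 (fun _ => P) (fun _ => H)). Qed.

Lemma pigeon B (g : nat -> nat) : (forall n, (g n <= B)%N) ->
  exists phi, strict phi /\ exists v, forall k, g (phi k) = v.
Proof.
elim: B g => [|B IH] g hg.
  exists id; split; first exact: strict_id. exists 0%N => k. by have := hg k; lia.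
case: (classic (forall N, exists n, (N <= n)%N /\ g n = B.+1)) => [h|h].
  have [phi [h1 h2]] := inf_sub _ h. by exists phi; split => //; exists B.+1.
have [N hN] : exists N, forall n, (N <= n)%N -> g n <> B.+1.
  apply: NNPP => hc; apply: h => N; apply: NNPP => hc2; apply: hc; exists N => n hn e.
  by apply: hc2; exists n.
have [phi [h1 [v h2]]] := IH (fun n => g (n + N)%N) (fun n => ltac:(have := hg (n + N)%N; have := hN (n + N)%N (leq_addl _ _); lia)).
exists (fun k => phi k + N)%N; split; last by exists v.
move=> m n hmn; have := h1 m n hmn; lia.
Qed.

Definition EC (h : nat -> nat) := exists v N, forall k, (N <= k)%N -> h k = v.

Lemma EC_sub h phi : EC h -> strict phi -> EC (fun k => h (phi k)).
Proof.
move=> [v [N hN]] hs; exists v, N => k hk; apply: hN.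
have := strict_ge _ hs k; lia.
Qed.

Section Diag.
Variable g : nat -> nat -> nat.
Variable B : nat -> nat.
Hypothesis hB : forall j n, (g j n <= B j)%N.

Definition sel j (psi : nat -> nat) : nat -> nat :=
  epsilon (inhabits id) (fun sg => strict sg /\ exists v, forall k, g j (psi (sg k)) = v).

Lemma sel_spec j psi : strict (sel j psi) /\ exists v, forall k, g j (psi (sel j psi k)) = v.
Proof.
exact: (epsilon_spec (inhabits id) (fun sg => strict sg /\ exists v, forall k, g j (psi (sg k)) = v)
  (pigeon (B j) (fun n => g j (psi n)) (fun n => hB j (psi n)))).
Qed.

Fixpoint Phi j : nat -> nat :=
  if j is j'.+1 then fun k => Phi j' (sel j' (Phi j') k) else id.

Lemma Phi_strict j : strict (Phi j).
Proof.
elim: j => [|j IH] /=; first exact: strict_id.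
apply: strict_comp => //; exact: (sel_spec j (Phi j)).1.
Qed.

Lemma Phi_range j i : (j <= i)%N -> forall k, exists m, Phi i k = Phi j m.
Proof.
elim: i => [|i IH]; first by rewrite leqn0 => /eqP -> k; exists k.
rewrite leq_eqVlt => /orP [/eqP ->|]; first by move=> k; exists k.
rewrite ltnS => hj k /=. exact: IH.
Qed.

Lemma diag : exists psi, strict psi /\ forall j, EC (fun k => g j (psi k)).
Proof.
exists (fun k => Phi k.+1 k); split.
  apply: strict_S => k.
  have hs := (sel_spec k.+1 (Phi k.+1)).1.
  change (Phi k.+1 k < Phi k.+1 (sel k.+1 (Phi k.+1) k.+1)).
  apply: (Phi_strict k.+1).
  have := strict_ge _ hs k.+1; lia.
move=> j.
have [v hv] := (sel_spec j (Phi j)).2.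
exists v, j => k hk.
have [m ->] := Phi_range (j.+1) (k.+1) ltac:(lia) k.
by rewrite /= hv.
Qed.
End Diag.

Definition Zinf (s : nat -> Z) := forall M, exists N, forall k, (N <= k)%N -> (M <= s k)%Z.

Lemma Zinf_sub s phi : Zinf s -> strict phi -> Zinf (fun k => s (phi k)).
Proof.
move=> h hs M; have [N hN] := h M; exists N => k hk; apply: hN.
have := strict_ge _ hs k; lia.
Qed.

Lemma dichoZ (s : nat -> Z) : exists phi, strict phi /\
  (Zinf (fun k => s (phi k)) \/ exists M, forall k, (s (phi k) <= M)%Z).
Proof.
case: (classic (forall M N, exists n, (N <= n)%N /\ (M <= s n)%Z)) => [h|h].
  have [phi [h1 h2]] := inf_sub2 (fun k n => (Z.of_nat k <= s n)%Z) (fun k N => h (Z.of_nat k) N).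
  exists phi; split => //.
  left => M; exists (Z.to_nat M) => k hk; have := h2 k; lia.
have [M [N hN]] : exists M N, forall n, (N <= n)%N -> (s n < M)%Z.
  apply: NNPP => hc; apply: h => M N; apply: NNPP => hc2; apply: hc; exists M, N => n hn.
  apply: NNPP => e; apply: hc2; exists n; split => //; lia.
exists (fun k => k + N)%N; split; first by move=> m n; lia.
right; exists M => k; have := hN (k + N)%N (leq_addl _ _); lia.
Qed.

Lemma trichoZ (s : nat -> Z) : exists phi, strict phi /\
  (Zinf (fun k => s (phi k)) \/ Zinf (fun k => - s (phi k))%Z \/ exists u, forall k, s (phi k) = u).
Proof.
have [p1 [hp1 [h1|[M hM]]]] := dichoZ s.
  by exists p1; split => //; left.
have [p2 [hp2 [h2|[L hL]]]] := dichoZ (fun k => - s (p1 k))%Z.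
  exists (fun k => p1 (p2 k)); split; first exact: strict_comp.
  by right; left.
have [p3 [hp3 [v hv]]] := pigeon (Z.to_nat (M + L)) (fun k => Z.to_nat (s (p1 (p2 k)) + L))
  ltac:(move=> n; have := hM (p2 n); have := hL n; lia).
exists (fun k => p1 (p2 (p3 k))); split.
  by apply: strict_comp => //; apply: strict_comp.
right; right; exists (Z.of_nat v - L)%Z => k.
have := hv k; have := hL (p3 k); lia.
Qed.

End Part2.
Import Part2.

Module Part3.
Local Open Scope R_scope.

Lemma leR (m n : nat) : (m <= n)%N -> (INR m <= INR n).
Proof. move=> h; apply: le_INR; exact/leP. Qed.
Lemma Rle_nat (m n : nat) : (INR m <= INR n) -> (m <= n)%N.
Proof. move=> h; apply/leP; exact: INR_le. Qed.
Lemma natRD (m n : nat) : INR (m + n)%N = (INR m + INR n).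
Proof. exact: plus_INR. Qed.

Lemma ev_list (H : Type) (P : nat -> H -> Prop) (F : list H) :
  (forall y, exists N, forall k, (N <= k)%N -> P k y) ->
  exists N, forall k, (N <= k)%N -> forall y, List.In y F -> P k y.
Proof.
move=> h; elim: F => [|y F [N IH]]; first by exists 0%N.
have [N1 h1] := h y.
exists (maxn N N1) => k hk w /= [<-|hw].
  apply: h1; lia.
apply: IH => //; lia.
Qed.

Lemma ev_seq (H : eqType) (P : nat -> H -> Prop) (F : seq H) :
  (forall y, exists N, forall k, (N <= k)%N -> P k y) ->
  exists N, forall k, (N <= k)%N -> forall y, y \in F -> P k y.
Proof.
move=> h; elim: F => [|y F [N IH]]; first by exists 0%N.
have [N1 h1] := h y.
exists (maxn N N1) => k hk w; rewrite inE => /orP [/eqP ->|hw].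
  apply: h1; lia.
apply: IH => //; lia.
Qed.

Section Horo.
Variable G : groupType.
Variable S : seq G.
Hypothesis hS : generates S.
Local Notation d := (word_dist S).
Local Notation o := (@monoid.one G).
Local Notation m := (fun y w => INR (word_dist S y w)).

Lemma lip_nat x y w : (d x y <= d x w + d y w)%N.
Proof. rewrite (wd_sym hS y w); exact: (wd_tri hS). Qed.

Lemma horo_lim (z : nat -> G) (th : G -> R) :
  (forall M, exists N, forall k, (N <= k)%N -> (M <= d (z k) o)%N) ->
  (forall y, exists N, forall k, (N <= k)%N -> busemann m o (z k) y = th y) ->
  horo_boundary m o th.
Proof.
move=> hz hth; split; [split; [|split]|].
- move=> y w.
  have [N1 h1] := hth y; have [N2 h2] := hth w.
  rewrite -(h1 (maxn N1 N2)) ?leq_maxl // -(h2 (maxn N1 N2)) ?leq_maxr //.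
  rewrite /busemann.
  set k := maxn N1 N2.
  have e1 := leR _ _ (lip_nat (z k) y w); have e2 := leR _ _ (lip_nat (z k) w y).
  rewrite natRD in e1; rewrite natRD (wd_sym hS w y) in e2.
  apply: Rabs_le; lra.
- have [N1 h1] := hth o. rewrite -(h1 N1) // /busemann; lra.
- move=> F eps heps.
  have [N hN] := ev_list _ (fun k y => busemann m o (z k) y = th y) F hth.
  exists (z N) => y hy; rewrite (hN N (leqnn N) y hy) Rminus_diag Rabs_R0 //.
- move=> [x hx].
  have [N0 h0] := ev_seq _ (fun k y => busemann m o (z k) y = th y) (x :: map (monoid.mul x) (gens S)) hth.
  have [N1 h1] := hz (d x o).+1.
  set k := maxn N0 N1.
  have hk1 := h1 k (leq_maxr _ _).
  have ex := h0 k (leq_maxl _ _) x (mem_head _ _).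
  rewrite hx /busemann wd_refl /= in ex.
  have hpos : (0 < d x (z k))%N.
    rewrite (wd_sym hS); case e: (d (z k) x) => [|n]; last by [].
    rewrite e /= in ex. have := leR _ _ hk1. rewrite S_INR. lra.
  have [s [hs hsd]] := neighbor hS _ _ hpos.
  have exs := h0 k (leq_maxl _ _) (monoid.mul x s) ltac:(by rewrite inE (map_f _ hs) orbT).
  rewrite hx /busemann in exs.
  have : (d (z k) x <= d (z k) (monoid.mul x s))%N.
    apply: Rle_nat. have := pos_INR (d x (monoid.mul x s)). lra.
  rewrite (wd_sym hS (z k) (monoid.mul x s)) (wd_sym hS (z k) x). lia.
Qed.
End Horo.

End Part3.
Import Part3.

Module Part4.
Local Open Scope R_scope.

Lemma diamondP (G G' : groupType) (S : seq G) (S' : seq G') f r p q :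
  diamond S S' f r p q <-> (word_dist S p.1 q.1 <= r)%N /\
     (word_dist S' p.2 q.2 <= f (r - word_dist S p.1 q.1))%N.
Proof.
split.
  move=> [t [h1 [h2 h3]]]; split; first lia.
  have -> : (r - word_dist S p.1 q.1 = t)%N by lia. done.
move=> [h1 h2]; exists (r - word_dist S p.1 q.1)%N; split; first lia.
split => //; lia.
Qed.

Lemma flin_aux (f : nat -> nat) (c : R) :
  (forall m, exists N, forall n, (N <= n)%N -> Rabs (INR (f (n + m)%N) - INR (f n) - c * INR m) <= 1) ->
  forall M, exists N, forall j n, (j <= M)%N -> (N <= n)%N -> Rabs (INR (f (n + j)%N) - INR (f n) - c * INR j) <= 1.
Proof.
move=> h; elim => [|M [N IH]].
  have [N hN] := h 0%N; exists N => j n hj hn.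
  have -> : j = 0%N by lia. exact: hN.
have [N1 h1] := h M.+1; exists (maxn N N1) => j n hj hn.
case: (leqP j M) => hjM.
  apply: IH => //; lia.
have -> : j = M.+1 by lia. apply: h1; lia.
Qed.

Lemma flin (f : nat -> nat) (c : R) :
  (forall m, exists N, forall n, (N <= n)%N -> Rabs (INR (f (n + m)%N) - INR (f n) - c * INR m) <= 1) ->
  forall M, exists N, forall p q, (N <= p)%N -> (N <= q)%N -> (p <= q + M)%N -> (q <= p + M)%N ->
    Rabs (INR (f p) - INR (f q) - c * (INR p - INR q)) <= 1.
Proof.
move=> h M; have [N hN] := flin_aux _ _ h M; exists N => p q hp hq h1 h2.
case: (leqP q p) => hqp.
  have e : p = (q + (p - q))%N by lia.
  have := hN (p - q)%N q ltac:(lia) hq. rewrite -e.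
  have hqp' : (q <= p)%coq_nat by apply/leP.
  by rewrite (minus_INR p q hqp').
have e : q = (p + (q - p))%N by lia.
have := hN (q - p)%N p ltac:(lia) hp. rewrite -e.
have hpq' : (p <= q)%coq_nat by apply/leP; lia.
rewrite (minus_INR q p hpq').
move=> hh. rewrite -Rabs_Ropp. by have -> : - (INR (f p) - INR (f q) - c * (INR p - INR q)) = INR (f q) - INR (f p) - c * (INR q - INR p) by ring.
Qed.

Lemma fell_EC (H : Type) (P : nat -> H -> Prop) :
  (forall z, exists N, (forall k, (N <= k)%N -> P k z) \/ (forall k, (N <= k)%N -> ~ P k z)) ->
  fell_conv P (fun z => exists N, forall k, (N <= k)%N -> P k z).
Proof.
move=> h; rewrite /fell_conv => z; have [N [hN|hN]] := h z.
  exists N => k hk; split => _; [by exists N | exact: hN].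
exists N => k hk; split => [hp|[N' hN']]; first by case: (hN k hk).
case: (hN (maxn N N') ltac:(lia)); apply: hN'; lia.
Qed.

Definition indic (P : Prop) : nat := if excluded_middle_informative P then 1%N else 0%N.

Lemma indic_le P : (indic P <= 1)%N.
Proof. by rewrite /indic; case: excluded_middle_informative. Qed.

Lemma EC_ind (P : nat -> Prop) : EC (fun k => indic (P k)) ->
  exists N, (forall k, (N <= k)%N -> P k) \/ (forall k, (N <= k)%N -> ~ P k).
Proof.
move=> [v [N hN]]; exists N.
case: (v =P 1%N) => [e|ne].
  left => k hk; move: (hN k hk); rewrite /indic; case: excluded_middle_informative => [p|np] ee //; simpl in ee; exfalso; lia.
right => k hk; move: (hN k hk); rewrite /indic; case: excluded_middle_informative => [p|np] ee //; simpl in ee; exfalso; lia.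
Qed.

Lemma enum_surj (G : groupType) (S : seq G) : generates S ->
  exists e : nat -> G, forall g, exists j, e j = g.
Proof.
move=> hS.
exists (fun j => match @unpickle (prod nat nat) j with
   | Some (n, i) => wprod (nth [::] (words (gens S) n) i)
   | None => monoid.one end) => g.
have [n /hasP [w hw /eqP hwg]] := hS g.
exists (pickle (n, index w (words (gens S) n))).
by rewrite pickleK nth_index.
Qed.

Lemma enum_surj2 (A B : Type) (eA : nat -> A) (eB : nat -> B) :
  (forall g, exists j, eA j = g) -> (forall g, exists j, eB j = g) ->
  exists e : nat -> A * B, forall g, exists j, e j = g.
Proof.
move=> hA hB.
exists (fun j => match @unpickle (prod nat nat) j with
   | Some (n, i) => (eA n, eB i)
   | None => (eA 0%N, eB 0%N) end) => [[g1 g2]].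
have [j1 h1] := hA g1; have [j2 h2] := hB g2.
exists (pickle (j1, j2)). by rewrite pickleK h1 h2.
Qed.

End Part4.
Import Part4.

Module Part5.
Local Open Scope R_scope.

Lemma tri1 (G : groupType) (S : seq G) (hS : generates S) x y o :
  (word_dist S x y <= word_dist S x o + word_dist S y o)%N.
Proof. rewrite (wd_sym hS y o); exact: wd_tri. Qed.

Lemma tri2 (G : groupType) (S : seq G) (hS : generates S) x y o :
  (word_dist S x o <= word_dist S x y + word_dist S y o)%N.
Proof. exact: wd_tri. Qed.

Lemma IZR_nat_sub a b : IZR (Z.of_nat a - Z.of_nat b) = INR a - INR b.
Proof. by rewrite minus_IZR -!INR_IZR_INZ. Qed.

Lemma INR_sub3 a b e : (e <= a + b)%N -> INR (a + b - e)%N = INR a + INR b - INR e.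
Proof.
move=> h. have h' : (e <= a + b)%coq_nat by apply/leP.
by rewrite (minus_INR _ _ h') natRD.
Qed.


Lemma natRB a b : (b <= a)%N -> INR (a - b)%N = INR a - INR b.
Proof. move=> h; have h' : (b <= a)%coq_nat by apply/leP. exact: minus_INR. Qed.

Lemma absle x b : Rabs x <= b -> - b <= x /\ x <= b.
Proof. move=> h; have := Rle_abs x; have := Rle_abs (- x); rewrite Rabs_Ropp; lra. Qed.

End Part5.
Import Part5.
Local Open Scope R_scope.

Theorem lemma3p3
  (G G' : groupType) (S : seq G) (S' : seq G')
  (hS : generates S) (hS' : generates S')
  (a a' : R)
  (ha : growth_rate S a) (ha' : growth_rate S' a')
  (ha1 : (1 < a)) (ha1' : (1 < a'))
  (f : nat -> nat) (r : nat -> nat)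
  (hf_mono : forall m n, (m <= n)%nat -> (f m <= f n)%nat)
  (hf0 : f 0%nat = 0%nat)
  (hr : forall m n, (m < n)%nat -> (r m < r n)%nat)
  (hratio : exists k K : R, (0 < k) /\
     forall n, (k <= INR (ball_vol S' (f (r n))) / INR (ball_vol S (r n)) <= K))
  (hf_lin : forall m, exists N, forall n, (N <= n)%nat ->
     (Rabs (INR (f (n + m)%nat) - INR (f n) - (ln a / ln a') * INR m) <= 1))
  (x : nat -> G) (x' : nat -> G')
  (hx : forall M, exists N, forall n, (N <= n)%nat ->
          (M <= word_dist S (x n) (@monoid.one G))%nat)
  (hx' : forall M, exists N, forall n, (N <= n)%nat ->
          (M <= word_dist S' (x' n) (@monoid.one G'))%nat) :
  let c := (ln a / ln a') in
  exists phi : nat -> nat, (forall m n, (m < n)%nat -> (phi m < phi n)%nat) /\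
  exists C : G * G' -> Prop,
    fell_conv (fun k => diamond S S' f (r (phi k)) (x (phi k), x' (phi k))) C /\
    ( (forall z, ~ C z)
    \/ (forall z, C z)
    \/ exists (th : G -> R) (th' : G' -> R) (delta : R),
         horo_boundary (fun y z => INR (word_dist S y z)) (@monoid.one G) th /\
         horo_boundary (fun y z => INR (word_dist S' y z)) (@monoid.one G') th' /\
         (forall z, horoball (pair_horo c th th') (delta - 2 / c) z -> C z) /\
         (forall z, C z -> horoball (pair_horo c th th') (delta + 1 / c) z) ).
Proof.
move=> c.
have hla : 0 < ln a by rewrite -ln_1; apply: ln_increasing; lra.
have hla' : 0 < ln a' by rewrite -ln_1; apply: ln_increasing; lra.
have hc : 0 < c by apply: Rdiv_lt_0_compat.
have hflin := flin _ _ hf_lin.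
have [eG heG] := enum_surj _ _ hS.
have [eG' heG'] := enum_surj _ _ hS'.
have [eP heP] := enum_surj2 _ _ _ _ heG heG'.
pose g1' y n := (word_dist S (x n) y + word_dist S y (@monoid.one G) - word_dist S (x n) (@monoid.one G))%N.
have [psi1 [hp1 hE1]] := diag (fun j => g1' (eG j)) (fun j => 2 * word_dist S (eG j) (@monoid.one G))%N
  ltac:(move=> j n; rewrite /g1'; have := tri1 _ _ hS (x n) (eG j) (@monoid.one G); lia).
pose g2' y n := (word_dist S' (x' n) y + word_dist S' y (@monoid.one G') - word_dist S' (x' n) (@monoid.one G'))%N.
have [psi2 [hp2 hE2]] := diag (fun j n => g2' (eG' j) (psi1 n)) (fun j => 2 * word_dist S' (eG' j) (@monoid.one G'))%N
  ltac:(move=> j n; rewrite /g2'; have := tri1 _ _ hS' (x' (psi1 n)) (eG' j) (@monoid.one G'); lia).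
pose D k := diamond S S' f (r k) (x k, x' k).
have [psi3 [hp3 hE3]] := diag (fun j n => indic (D (psi1 (psi2 n)) (eP j))) (fun _ => 1%N)
  ltac:(move=> j n; exact: indic_le).
pose Psi k := psi1 (psi2 (psi3 k)).
have hPsi : strict Psi by apply: strict_comp => //; apply: strict_comp.
have hall : forall phi, strict phi ->
   (forall y, EC (fun k => g1' y (Psi (phi k)))) /\
   (forall y, EC (fun k => g2' y (Psi (phi k)))) /\
   (forall z, EC (fun k => indic (D (Psi (phi k)) z))).
  move=> phi hphi; split; [|split].
  - move=> y; have [j <-] := heG y.
    have hs : strict (fun k => psi2 (psi3 (phi k))) by apply: strict_comp => //; apply: strict_comp.
    exact: (EC_sub _ _ (hE1 j) hs).
  - move=> y; have [j <-] := heG' y.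
    have hs : strict (fun k => psi3 (phi k)) by apply: strict_comp.
    exact: (EC_sub _ _ (hE2 j) hs).
  - move=> z; have [j <-] := heP z.
    exact: (EC_sub _ _ (hE3 j) hphi).
have hfell : forall phi, strict phi ->
  fell_conv (fun k => diamond S S' f (r (Psi (phi k))) (x (Psi (phi k)), x' (Psi (phi k))))
            (fun z => exists N, forall k, (N <= k)%N -> D (Psi (phi k)) z).
  move=> phi hphi; apply: fell_EC => z; apply: EC_ind; exact: (hall phi hphi).2.2 z.
have hxs : forall phi, strict phi -> forall M, exists N, forall k, (N <= k)%N ->
    (M <= word_dist S (x (phi k)) (@monoid.one G))%N.
  move=> phi hphi M; have [N hN] := hx M; exists N => k hk; apply: hN.
  have := strict_ge _ hphi k; lia.
have hxs' : forall phi, strict phi -> forall M, exists N, forall k, (N <= k)%N ->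
    (M <= word_dist S' (x' (phi k)) (@monoid.one G'))%N.
  move=> phi hphi M; have [N hN] := hx' M; exists N => k hk; apply: hN.
  have := strict_ge _ hphi k; lia.
pose s n := (Z.of_nat (r n) - Z.of_nat (word_dist S (x n) (@monoid.one G)))%Z.
have [phi1 [hq1 [hsinf|[M hM]]]] := dichoZ (fun k => s (Psi k)); last first.
  have hs1 : strict (fun k => Psi (phi1 k)) by apply: strict_comp.
  exists (fun k => Psi (phi1 k)); split; first exact: hs1.
  exists (fun z => exists N, forall k, (N <= k)%N -> D (Psi (phi1 k)) z); split; first exact: hfell _ hq1.
  left => [[y y']] [N hN].
  pose Fb := f (Z.to_nat M + word_dist S y (@monoid.one G))%N.
  have [N' hN'] := hxs' _ hs1 (Fb + word_dist S' y' (@monoid.one G')).+1.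
  pose k := maxn N N'.
  have := hN k (leq_maxl _ _); rewrite /D diamondP /= => -[h1 h2].
  have h3 := hN' k (leq_maxr _ _). have h4 := hM k.
  rewrite /s in h4.
  have h5 : (r (Psi (phi1 k)) - word_dist S (x (Psi (phi1 k))) y <= Z.to_nat M + word_dist S y (@monoid.one G))%N.
    have := tri2 _ _ hS (x (Psi (phi1 k))) y (@monoid.one G). lia.
  have h6 := hf_mono _ _ h5.
  have h7 := tri2 _ _ hS' (x' (Psi (phi1 k))) y' (@monoid.one G').
  rewrite /Fb in h3. lia.
pose u n := (Z.of_nat (f (r n - word_dist S (x n) (@monoid.one G))%N) - Z.of_nat (word_dist S' (x' n) (@monoid.one G')))%Z.
have [phi2 [hq2 hu]] := trichoZ (fun k => u (Psi (phi1 k))).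
have hs2 : strict (fun k => phi1 (phi2 k)) by apply: strict_comp.
have hsinf2 := Zinf_sub _ _ hsinf hq2.
have KEY : forall y, exists N, forall k, (N <= k)%N ->
   (word_dist S (x (Psi (phi1 (phi2 k)))) y <= r (Psi (phi1 (phi2 k))))%N /\
   Rabs (INR (f (r (Psi (phi1 (phi2 k))) - word_dist S (x (Psi (phi1 (phi2 k)))) y)%N)
       - INR (f (r (Psi (phi1 (phi2 k))) - word_dist S (x (Psi (phi1 (phi2 k)))) (@monoid.one G))%N)
       - c * (INR (word_dist S (x (Psi (phi1 (phi2 k)))) (@monoid.one G))
              - INR (word_dist S (x (Psi (phi1 (phi2 k)))) y))) <= 1.
  move=> y.
  have [N0 hN0] := hflin (word_dist S y (@monoid.one G)).
  have [N hN] := hsinf2 (Z.of_nat (N0 + 2 * word_dist S y (@monoid.one G))).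
  exists N => k hk.
  have h1 := hN k hk; rewrite /= /s in h1.
  set n := Psi (phi1 (phi2 k)) in h1 *.
  have t1 := tri1 _ _ hS (x n) y (@monoid.one G).
  have t2 := tri2 _ _ hS (x n) y (@monoid.one G).
  split; first lia.
  have := hN0 (r n - word_dist S (x n) y)%N (r n - word_dist S (x n) (@monoid.one G))%N
    ltac:(lia) ltac:(lia) ltac:(lia) ltac:(lia).
  rewrite (natRB (r n) (word_dist S (x n) y)) ?(natRB (r n) (word_dist S (x n) (@monoid.one G))); try lia.
  by have -> : INR (r n) - INR (word_dist S (x n) y) - (INR (r n) - INR (word_dist S (x n) (@monoid.one G))) =
     INR (word_dist S (x n) (@monoid.one G)) - INR (word_dist S (x n) y) by ring.
have hs : strict (fun k => Psi (phi1 (phi2 k))) by apply: strict_comp.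
exists (fun k => Psi (phi1 (phi2 k))); split; first exact: hs.
exists (fun z => exists N, forall k, (N <= k)%N -> D (Psi (phi1 (phi2 k))) z); split; first exact: hfell _ hs2.
case: hu => [hup|[hdn|[u0 hu0]]].
- right; left => [[y y']].
  have [N1 hN1] := KEY y.
  have [up1 _] := archimed (c * INR (word_dist S y (@monoid.one G))).
  have [N2 hN2] := hup (Z.of_nat (word_dist S' y' (@monoid.one G')) + up (c * INR (word_dist S y (@monoid.one G))) + 2)%Z.
  exists (maxn N1 N2) => k hk.
  have [k1 k2] := hN1 k ltac:(lia).
  have k3 := hN2 k ltac:(lia).
  rewrite /u /= in k3.
  set n := Psi (phi1 (phi2 k)) in k1 k2 k3 *.
  rewrite /D diamondP /=; split => //.
  apply: Rle_nat.
  apply IZR_le in k3. rewrite IZR_nat_sub !plus_IZR -INR_IZR_INZ in k3.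
  have t1 := leR _ _ (tri1 _ _ hS' (x' n) y' (@monoid.one G')); rewrite natRD in t1.
  have t2 := leR _ _ (tri1 _ _ hS (x n) y (@monoid.one G)); rewrite natRD in t2.
  have t3 := Rmult_le_compat_l c (- INR (word_dist S y (@monoid.one G))) (INR (word_dist S (x n) (@monoid.one G)) - INR (word_dist S (x n) y)) (Rlt_le _ _ hc) ltac:(lra).
  have [k4 k5] := absle _ _ k2.
  lra.
- left => [[y y']] [N hN].
  have [N1 hN1] := KEY y.
  have [up1 _] := archimed (c * INR (word_dist S y (@monoid.one G))).
  have [N2 hN2] := hdn (Z.of_nat (word_dist S' y' (@monoid.one G')) + up (c * INR (word_dist S y (@monoid.one G))) + 2)%Z.
  pose k := maxn N (maxn N1 N2).
  have := hN k ltac:(lia); rewrite /D diamondP /= => -[h1 h2].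
  have [k1 k2] := hN1 k ltac:(lia).
  have k3 := hN2 k ltac:(lia).
  rewrite /u /= in k3.
  set n := Psi (phi1 (phi2 k)) in h1 h2 k1 k2 k3 *.
  apply IZR_le in k3. rewrite opp_IZR IZR_nat_sub !plus_IZR -INR_IZR_INZ in k3.
  have h3 := leR _ _ h2.
  have t1 := leR _ _ (tri2 _ _ hS' (x' n) y' (@monoid.one G')); rewrite natRD in t1.
  have t2 := leR _ _ (tri2 _ _ hS (x n) y (@monoid.one G)); rewrite natRD in t2.
  have t3 := Rmult_le_compat_l c (INR (word_dist S (x n) (@monoid.one G)) - INR (word_dist S (x n) y)) (INR (word_dist S y (@monoid.one G))) (Rlt_le _ _ hc) ltac:(lra).
  have [k4 k5] := absle _ _ k2.
  lra.
- right; right.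
  pose th y := epsilon (inhabits 0) (fun t => exists N, forall k, (N <= k)%N ->
      busemann (fun y z => INR (word_dist S y z)) (@monoid.one G) (x (Psi (phi1 (phi2 k)))) y = t).
  have hth : forall y, exists N, forall k, (N <= k)%N ->
      busemann (fun y z => INR (word_dist S y z)) (@monoid.one G) (x (Psi (phi1 (phi2 k)))) y = th y.
    move=> y.
    have [v [N hN]] := (hall _ hs2).1 y.
    have ex : exists t, exists N, forall k, (N <= k)%N ->
      busemann (fun y z => INR (word_dist S y z)) (@monoid.one G) (x (Psi (phi1 (phi2 k)))) y = t.
      exists (INR v - INR (word_dist S y (@monoid.one G))), N => k hk.
      have := hN k hk; rewrite /g1' => e.
      rewrite /busemann -e INR_sub3; first lra.
      exact: tri2.
    exact: (epsilon_spec _ _ ex).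
  pose th' y := epsilon (inhabits 0) (fun t => exists N, forall k, (N <= k)%N ->
      busemann (fun y z => INR (word_dist S' y z)) (@monoid.one G') (x' (Psi (phi1 (phi2 k)))) y = t).
  have hth' : forall y, exists N, forall k, (N <= k)%N ->
      busemann (fun y z => INR (word_dist S' y z)) (@monoid.one G') (x' (Psi (phi1 (phi2 k)))) y = th' y.
    move=> y.
    have [v [N hN]] := (hall _ hs2).2.1 y.
    have ex : exists t, exists N, forall k, (N <= k)%N ->
      busemann (fun y z => INR (word_dist S' y z)) (@monoid.one G') (x' (Psi (phi1 (phi2 k)))) y = t.
      exists (INR v - INR (word_dist S' y (@monoid.one G'))), N => k hk.
      have := hN k hk; rewrite /g2' => e.
      rewrite /busemann -e INR_sub3; first lra.
      exact: tri2.
    exact: (epsilon_spec _ _ ex).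
  exists th, th', (IZR u0 / c).
  split; first exact: (horo_lim _ _ hS (fun k => x (Psi (phi1 (phi2 k)))) th (hxs _ hs) hth).
  split; first exact: (horo_lim _ _ hS' (fun k => x' (Psi (phi1 (phi2 k)))) th' (hxs' _ hs) hth').
  split.
  + move=> [y y']; rewrite /horoball /pair_horo /= => hb.
    have hb2 : c * th y + th' y' <= IZR u0 - 2.
      have h := Rmult_le_compat_l c _ _ (Rlt_le _ _ hc) hb.
      have e1 : c * (th y + th' y' / c) = c * th y + th' y' by field; lra.
      have e2 : c * (IZR u0 / c - 2 / c) = IZR u0 - 2 by field; lra.
      rewrite e1 e2 in h; exact: h.
    have [N1 hN1] := KEY y. have [N2 hN2] := hth y. have [N3 hN3] := hth' y'.
    exists (maxn N1 (maxn N2 N3)) => k hk.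
    have [k1 k2] := hN1 k ltac:(lia).
    have k3 := hN2 k ltac:(lia). have k4 := hN3 k ltac:(lia). have k5 := hu0 k.
    rewrite /u /= in k5. rewrite /busemann in k3 k4.
    set n := Psi (phi1 (phi2 k)) in k1 k2 k3 k4 k5 *.
    rewrite /D diamondP /=; split => //. apply: Rle_nat.
    have k6 : IZR u0 = INR (f (r n - word_dist S (x n) (@monoid.one G))%N) - INR (word_dist S' (x' n) (@monoid.one G')) by rewrite -k5 IZR_nat_sub.
    have e : INR (word_dist S (x n) (@monoid.one G)) - INR (word_dist S (x n) y) = - th y by lra.
    rewrite e in k2. have [k7 k8] := absle _ _ k2.
    lra.
  + move=> [y y'] [N hN]; rewrite /horoball /pair_horo /=.
    have [N1 hN1] := KEY y. have [N2 hN2] := hth y. have [N3 hN3] := hth' y'.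
    pose k := maxn N (maxn N1 (maxn N2 N3)).
    have := hN k ltac:(lia); rewrite /D diamondP /= => -[h1 h2].
    have [k1 k2] := hN1 k ltac:(lia).
    have k3 := hN2 k ltac:(lia). have k4 := hN3 k ltac:(lia). have k5 := hu0 k.
    rewrite /u /= in k5. rewrite /busemann in k3 k4.
    set n := Psi (phi1 (phi2 k)) in h1 h2 k1 k2 k3 k4 k5 *.
    have h3 := leR _ _ h2.
    have k6 : IZR u0 = INR (f (r n - word_dist S (x n) (@monoid.one G))%N) - INR (word_dist S' (x' n) (@monoid.one G')) by rewrite -k5 IZR_nat_sub.
    have e : INR (word_dist S (x n) (@monoid.one G)) - INR (word_dist S (x n) y) = - th y by lra.
    rewrite e in k2. have [k7 k8] := absle _ _ k2.
    have hb : c * th y + th' y' <= IZR u0 + 1 by lra.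
    have h := Rmult_le_compat_l (/ c) _ _ (Rlt_le _ _ (Rinv_0_lt_compat _ hc)) hb.
    have e1 : / c * (c * th y + th' y') = th y + th' y' / c by field; lra.
    have e2 : / c * (IZR u0 + 1) = IZR u0 / c + 1 / c by field; lra.
    rewrite e1 e2 in h; exact: h.
Qed.
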